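(* In the multi-sender privacy game, let $(\alpha^{(i),0})_{i\in\mathbf{N}}\in\prod_iA'_i$ and $\beta^0\in B'$, and generate a random sequence as follows: for $k=1,2,\dots$, select $j\in\{0,1,\dots,n\}$ uniformly at random (independently of the past); if $j=0$, choose $\beta^k\in\arg\min_{\beta\in B'}V((\alpha^{(i),k-1})_{i},\beta)$ and set $\alpha^{(i),k}=\alpha^{(i),k-1}$ for all $i\in\mathbf{N}$; if $j\ge1$, choose $\alpha^{(j),k}\in\arg\min_{\alpha^{(j)}\in A'_j}U_j(\alpha^{(j)},(\alpha^{(i),k-1})_{i\neq j},\beta^{k-1})$, set $\alpha^{(i),k}=\alpha^{(i),k-1}$ for $i\in\mathbf{N}\setminus\{j\}$ and $\beta^k=\beta^{k-1}$. Then for every $\epsilon>0$, $\lim_{k\to\infty}\mathbb{P}\{((\alpha^{(i),k})_{i\in\mathbf{N}},\beta^k)\in\mathcal{N}'_\epsilon\}=1$, where $\mathcal{N}'_\epsilon$ is the set of all $((\alpha^{(i)})_i,\beta)\in\prod_iA'_i\times B'$ such that $U_j((\alpha^{(i)})_i,\beta)\le U_j(\bar\alpha^{(j)},(\alpha^{(i)})_{i\neq j},\beta)+\epsilon$ for all $j\in\mathbf{N}$, $\bar\alpha^{(j)}\in A'_j$, and $V((\alpha^{(i)})_i,\beta)\le V((\alpha^{(i)})_i,\bar\beta)+\epsilon$ for all $\bar\beta\in B'$.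
   Context: Multi-sender privacy game. Let $n\ge 2$, $\mathbf{N}=\{1,\dots,n\}$, and let $\mathcal{X}$, $\mathcal{W}_i$, $\mathcal{Y}_i$ ($i\in\mathbf{N}$) be finite nonempty sets. $(X,(Z_i)_{i\in\mathbf{N}},(W_i)_{i\in\mathbf{N}})$ has joint probability mass function $p$ on $\mathcal{X}\times\mathcal{X}^n\times\prod_i\mathcal{W}_i$. Sender $i$ observes $(Z_i,W_i)$ and sends $Y_i\in\mathcal{Y}_i$ with $\mathbb{P}\{Y_i=y_i\mid Z_i=z_i,W_i=w_i\}=\alpha^{(i)}_{y_iz_iw_i}$, independently across senders given the observations, where $\alpha^{(i)}\in A'_i=\{\alpha^{(i)}:\alpha^{(i)}_{y_iz_iw_i}\in[0,1],\ \sum_{y_i}\alpha^{(i)}_{y_iz_iw_i}=1\ \forall(z_i,w_i)\in\mathcal{X}\times\mathcal{W}_i\}$. The receiver outputs $\hat X\in\mathcal{X}$ with $\mathbb{P}\{\hat X=\hat x\mid (Y_i)_i=(y_i)_i\}=\beta_{\hat x y_1\dots y_n}$, $\beta\in B'=\{\beta:\beta_{\hat x y_1\dots y_n}\in[0,1],\ \sum_{\hat x}\beta_{\hat x y_1\dots y_n}=1\ \forall (y_i)_i\}$. Let $d:\mathcal{X}\times\mathcal{X}\to\mathbb{R}_{\ge0}$ and $\varrho\in\mathbb{R}$. Define $\xi'(\beta,(\alpha^{(i)})_i)=\sum_{(y_1,z_1,w_1)}\cdots\sum_{(y_n,z_n,w_n)}\sum_{\hat x,x\in\mathcal{X}}d(x,\hat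 x)\beta_{\hat x y_1\dots y_n}\prod_{i\in\mathbf{N}}\alpha^{(i)}_{y_iz_iw_i}\,p(x,(z_i)_i,(w_i)_i)$, each $(y_i,z_i,w_i)$ ranging over $\mathcal{Y}_i\times\mathcal{X}\times\mathcal{W}_i$ (this is $\mathbb{E}\{d(X,\hat X)\}$). Define $\zeta'_j(\alpha^{(j)})=I(Y_j;W_j)=\sum_{y,w}P^j_{yw}\log\frac{P^j_{yw}}{P^j_yP^j_w}$ (with $0\log0=0$), where $P^j_w=\mathbb{P}\{W_j=w\}$, $P^j_{yw}=\sum_{z\in\mathcal{X}}\alpha^{(j)}_{yzw}\mathbb{P}\{Z_j=z,W_j=w\}$, $P^j_y=\sum_w P^j_{yw}$. Sender $j$'s cost: $U_j((\alpha^{(i)})_i,\beta)=\xi'(\beta,(\alpha^{(i)})_i)+\varrho\zeta'_j(\alpha^{(j)})$; receiver's cost: $V((\alpha^{(i)})_i,\beta)=\xi'(\beta,(\alpha^{(i)})_i)$. *)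

(* Defs.v *)
From HB Require Import structures.
From mathcomp Require Import all_boot all_order all_algebra.
From mathcomp Require Import all_classical all_reals all_analysis.
Set Implicit Arguments. Unset Strict Implicit. Unset Printing Implicit Defensive.
Import Order.TTheory GRing.Theory Num.Theory.
Local Open Scope ring_scope.

Section Game.
Variable R : realType.
Variable n : nat.
Variable X : finType.
Variables (W Y : 'I_n -> finType).

Definition Zs := {ffun 'I_n -> X}.
Definition Ws := {dffun forall i : 'I_n, W i}.
Definition Ys := {dffun forall i : 'I_n, Y i}.

(* sender i's strategy alpha^(i)_{y z w} and receiver's beta_{xhat y_1..y_n} *)
Definition strat (i : 'I_n) := Y i -> X -> W i -> R.
Definition profile := forall i : 'I_n, strat i.
Definition rstrat := X -> Ys -> R.

Definition is_pmf (p : X -> Zs -> Ws -> R) : Prop :=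
  (forall x z w, 0 <= p x z w) /\
  \sum_(x : X) \sum_(z : Zs) \sum_(w : Ws) p x z w = 1.

Definition inA (i : 'I_n) (a : strat i) : Prop :=
  (forall y z w, 0 <= a y z w <= 1) /\ (forall z w, \sum_(y : Y i) a y z w = 1).
Definition inAs (al : profile) : Prop := forall i, inA (al i).
Definition inB (b : rstrat) : Prop :=
  (forall xh y, 0 <= b xh y <= 1) /\ (forall y, \sum_(xh : X) b xh y = 1).

Variable p : X -> Zs -> Ws -> R.
Variable d : X -> X -> R.
Variable rho : R.

Definition xi (b : rstrat) (al : profile) : R :=
  \sum_(y : Ys) \sum_(z : Zs) \sum_(w : Ws) \sum_(xh : X) \sum_(x : X)
    d x xh * b xh y * (\prod_(i : 'I_n) al i (y i) (z i) (w i)) * p x z w.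

Definition PZW (j : 'I_n) (z : X) (w : W j) : R :=
  \sum_(x : X) \sum_(zs : Zs | zs j == z) \sum_(ws : Ws | ws j == w) p x zs ws.
Definition PW (j : 'I_n) (w : W j) : R := \sum_(z : X) PZW z w.
Definition PYW (j : 'I_n) (a : strat j) (y : Y j) (w : W j) : R :=
  \sum_(z : X) a y z w * PZW z w.
Definition PY (j : 'I_n) (a : strat j) (y : Y j) : R :=
  \sum_(w : W j) PYW a y w.

(* zeta'_j(alpha^(j)) = I(Y_j; W_j), natural log, with 0 log 0 = 0 *)
Definition zeta (j : 'I_n) (a : strat j) : R :=
  \sum_(y : Y j) \sum_(w : W j)
    (if PYW a y w == 0 then 0
     else PYW a y w * ln (PYW a y w / (PY a y * PW w))).

Definition upd (al : profile) (j : 'I_n) (a : strat j) : profile :=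
  @dfwith _ strat al j a.

Definition U (j : 'I_n) (al : profile) (b : rstrat) : R :=
  xi b al + rho * zeta (al j).
Definition V (al : profile) (b : rstrat) : R := xi b al.

Definition inN (eps : R) (al : profile) (b : rstrat) : Prop :=
  inAs al /\ inB b /\
  (forall (j : 'I_n) (a : strat j), inA a -> U j al b <= U j (upd al a) b + eps) /\
  (forall bb : rstrat, inB bb -> V al b <= V al bb + eps).

(* A history is the list of the uniformly drawn indices
   j in {0,..,n} (encoded as 'I_n.+1; j = 0 is the receiver, j = i.+1 is sender i),
   most recent first.  The argmin selections may depend on the past history. *)
Variables (al0 : profile) (b0 : rstrat).
Variable selB : seq 'I_n.+1 -> profile -> rstrat.
Variable selA : forall j : 'I_n, seq 'I_n.+1 -> profile -> rstrat -> strat j.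

Fixpoint traj (h : seq 'I_n.+1) : profile * rstrat :=
  match h with
  | [::] => (al0, b0)
  | j :: h' =>
      let s := traj h' in
      match unlift ord0 j with
      | None => (s.1, selB h' s.1)
      | Some i => (upd s.1 (@selA i h' s.1 s.2), s.2)
      end
  end.

(* P{ ((alpha^(i),k)_i, beta^k) in N'_eps }, the k draws being i.i.d. uniform *)
Definition probN (eps : R) (k : nat) : R :=
  (\sum_(t : k.-tuple 'I_n.+1)
     (if `[< inN eps (traj t).1 (traj t).2 >] then 1 else 0))
  / ((n.+1) ^ k)%:R.

End Game.

(* Main.v *)
Require Import Defs.
From HB Require Import structures.
From mathcomp Require Import all_boot all_order all_algebra.
From mathcomp Require Import all_classical all_reals all_analysis.
From mathcomp Require Import lra ring.
Import Order.TTheory GRing.Theory Num.Theory.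
Import numFieldNormedType.Exports.
Local Open Scope ring_scope.

Section Aux.
Variables (R : realType) (n : nat) (X : finType) (W Y : 'I_n -> finType).
Variable p : X -> Zs n X -> Ws W -> R.
Hypothesis hp : is_pmf p.

Lemma le_sum_term {T : finType} (F : T -> R) i :
  (forall j, 0 <= F j) -> F i <= \sum_j F j.
Proof. move=> h; rewrite (bigD1 i) //= lerDl; exact: sumr_ge0. Qed.

Lemma part_sum {T J : finType} (f : T -> J) (G : T -> R) :
  \sum_t G t = \sum_j \sum_(t | f t == j) G t.
Proof. by rewrite (partition_big f xpredT). Qed.

Lemma PZW_ge0 j z (w : W j) : 0 <= PZW p z w.
Proof.
rewrite /PZW; apply: sumr_ge0 => x _; apply: sumr_ge0 => zs _;
apply: sumr_ge0 => ws _; exact: hp.1.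
Qed.

Lemma sum_PW j : \sum_(w : W j) PW p w = 1.
Proof.
rewrite -hp.2 /PW /PZW.
rewrite exchange_big /=.
under eq_bigr => z _ do rewrite exchange_big /=.
rewrite exchange_big /=; apply: eq_bigr => x _.
rewrite [RHS](part_sum (fun zs : Zs n X => zs j)).
apply: eq_bigr => z _.
rewrite exchange_big /=; apply: eq_bigr => zs _.
by rewrite [RHS](part_sum (fun ws : Ws W => ws j)).
Qed.

Lemma PW_ge0 {j} (w : W j) : 0 <= PW p w.
Proof. apply: sumr_ge0 => z _; exact: PZW_ge0. Qed.

Lemma PW_le1 {j} (w : W j) : PW p w <= 1.
Proof. rewrite -(sum_PW j); apply: le_sum_term; exact: PW_ge0. Qed.



Lemma PYW_ge0 {j} {a : strat R X W Y j} y w : inA a -> 0 <= PYW p a y w.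
Proof.
move=> ha; apply: sumr_ge0 => z _; apply: mulr_ge0; first by case/andP: (ha.1 y z w).
exact: PZW_ge0.
Qed.

Lemma PY_ge0 {j} {a : strat R X W Y j} y : inA a -> 0 <= PY p a y.
Proof. move=> ha; apply: sumr_ge0 => w _; exact: PYW_ge0. Qed.

Lemma sum_PY {j} {a : strat R X W Y j} : inA a -> \sum_y PY p a y = 1.
Proof.
move=> ha; rewrite -(sum_PW j) /PY /PYW exchange_big /=; apply: eq_bigr => w _.
rewrite exchange_big /=; apply: eq_bigr => z _.
by rewrite -mulr_suml ha.2 mul1r.
Qed.

Lemma PY_le1 {j} {a : strat R X W Y j} y : inA a -> PY p a y <= 1.
Proof. move=> ha; rewrite -(sum_PY ha); apply: le_sum_term => y'; exact: PY_ge0. Qed.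

Lemma PYW_le_PW {j} {a : strat R X W Y j} y w : inA a -> PYW p a y w <= PW p w.
Proof.
move=> ha; apply: ler_sum => z _; rewrite ler_piMl //; first exact: PZW_ge0.
by case/andP: (ha.1 y z w).
Qed.

Lemma PYW_le_PY {j} {a : strat R X W Y j} y w : inA a -> PYW p a y w <= PY p a y.
Proof. move=> ha; apply: le_sum_term => w'; exact: PYW_ge0. Qed.

Lemma ln_le_sub1 (y : R) : 0 < y -> ln y <= y - 1.
Proof.
move=> y0; have := @le_ln1Dx R (y - 1); rewrite [1 + _]addrC subrK; apply; lra.
Qed.

Lemma term_bound {j} {a : strat R X W Y j} y w : inA a ->
  `|(if PYW p a y w == 0 then 0
     else PYW p a y w * ln (PYW p a y w / (PY p a y * PW p w)))| <= 1.
Proof.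
move=> ha; case: eqP => [_|nz]; first by rewrite normr0.
have x0 : 0 < PYW p a y w by rewrite lt_def; apply/andP; split; [apply/eqP|exact: PYW_ge0].
have h1 := PYW_le_PY y w ha; have h2 := PYW_le_PW y w ha.
have h3 := PY_le1 y ha; have h4 := PW_le1 w.
move: x0 h1 h2 h3 h4.
set x := PYW p a y w; set py := PY p a y; set pw := PW p w => x0 h1 h2 h3 h4.
have py0 : 0 < py by lra.
have pw0 : 0 < pw by lra.
have -> : ln (x / (py * pw)) = ln x - ln py - ln pw.
  rewrite lnM ?posrE ?invr_gt0 ?mulr_gt0 // lnV ?posrE ?mulr_gt0 //.
  rewrite lnM ?posrE //; lra.
have lpy : ln x <= ln py by rewrite ler_ln ?posrE.
have lpw : ln x <= ln pw by rewrite ler_ln ?posrE.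
have lpy0 : ln py <= 0 by exact: ln_le0.
have lpw0 : ln pw <= 0 by exact: ln_le0.
have hx : x * (- ln x) <= 1.
  have := @ln_le_sub1 x^-1; rewrite lnV ?posrE ?invr_gt0 // => hl.
  have : x * (- ln x) <= x * (x^-1 - 1) by apply: ler_wpM2l; [exact: ltW|exact: hl].
  rewrite mulrBr mulfV ?gt_eqF //; lra.
rewrite normrM gtr0_norm //.
have : `|ln x - ln py - ln pw| <= - ln x by rewrite ler_norml; apply/andP; split; lra.
move=> hn; apply: le_trans hx; apply: ler_wpM2l; [exact: ltW|exact: hn].
Qed.

Lemma zeta_bound j (a : strat R X W Y j) : inA a ->
  `|zeta p a| <= \sum_(y : Y j) \sum_(w : W j) (1 : R).
Proof.
move=> ha; rewrite /zeta; apply: le_trans (ler_norm_sum _ _ _) _.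
apply: ler_sum => y _; apply: le_trans (ler_norm_sum _ _ _) _.
apply: ler_sum => w _; exact: term_bound.
Qed.


Variable d : X -> X -> R.
Variable rho : R.
Hypothesis hd : forall x xh, 0 <= d x xh.

Definition phi (al : profile R X W Y) (b : rstrat R X Y) : R :=
  xi p d b al + rho * \sum_(i : 'I_n) zeta p (al i).

Definition Cb : R := \sum_(i : 'I_n) \sum_(y : Y i) \sum_(w : W i) (1:R).

Lemma xi_ge0 {al : profile R X W Y} {b : rstrat R X Y} : inAs al -> inB b -> 0 <= xi p d b al.
Proof.
move=> ha hb; rewrite /xi; apply: sumr_ge0 => y _; apply: sumr_ge0 => z _;
apply: sumr_ge0 => w _; apply: sumr_ge0 => xh _; apply: sumr_ge0 => x _.
apply: mulr_ge0; last exact: hp.1.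
apply: mulr_ge0; first apply: mulr_ge0; first exact: hd.
- by case/andP: (hb.1 xh y).
- apply: prodr_ge0 => i _; by case/andP: ((ha i).1 (y i) (z i) (w i)).
Qed.

Lemma phi_lb {al : profile R X W Y} {b : rstrat R X Y} : inAs al -> inB b -> - (`|rho| * Cb) <= phi al b.
Proof.
move=> ha hb; rewrite /phi.
have h1 := xi_ge0 ha hb.
have h2 : `|\sum_i zeta p (al i)| <= Cb.
  apply: le_trans (ler_norm_sum _ _ _) _; apply: ler_sum => i _; exact: zeta_bound.
have h3 := ler_norm (- (rho * \sum_i zeta p (al i))).
rewrite normrN normrM in h3.
have h4 : `|rho| * `|\sum_i zeta p (al i)| <= `|rho| * Cb.
  by apply: ler_wpM2l.
lra.
Qed.

Lemma upd_self (al : profile R X W Y) j : upd al (al j) = al.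
Proof.
apply: functional_extensionality_dep => k; rewrite /upd.
by case: (eqVneq j k) => [<-|ne]; [rewrite dfwithin | rewrite dfwithout].
Qed.

Lemma inAs_upd (al : profile R X W Y) j (a : strat R X W Y j) : inAs al -> inA a -> inAs (upd al a).
Proof.
move=> ha hA k; rewrite /upd.
by case: (eqVneq j k) => [<-|ne]; [rewrite dfwithin | rewrite dfwithout].
Qed.

Lemma phi_upd (al : profile R X W Y) i (a : strat R X W Y i) (b : rstrat R X Y) :
  phi (upd al a) b - phi al b = U p d rho i (upd al a) b - U p d rho i al b.
Proof.
rewrite /phi /U (bigD1 i) //= [in X in _ - X](bigD1 i) //=.
have -> : \sum_(k | k != i) zeta p (@upd R n X W Y al i a k) = \sum_(k | k != i) zeta p (al k).
  by apply: eq_bigr => k ki; rewrite /upd dfwithout // eq_sym.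
rewrite /upd dfwithin; ring.
Qed.

Variables (al0 : profile R X W Y) (b0 : rstrat R X Y).
Variable selB : seq 'I_n.+1 -> profile R X W Y -> rstrat R X Y.
Variable selA : forall j : 'I_n, seq 'I_n.+1 -> profile R X W Y -> rstrat R X Y -> strat R X W Y j.
Hypothesis hB : forall h al, inAs al ->
     inB (selB h al) /\ forall b, inB b -> V p d al (selB h al) <= V p d al b.
Hypothesis hA : forall (j : 'I_n) h al b, inAs al -> inB b ->
     inA (selA j h al b) /\
     forall a : strat R X W Y j, inA a ->
       U p d rho j (upd al (selA j h al b)) b <= U p d rho j (upd al a) b.
Hypothesis h0 : inAs al0.
Hypothesis hb0 : inB b0.

Notation tr := (traj al0 b0 selB selA).

Lemma traj_feas h : inAs (tr h).1 /\ inB (tr h).2.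
Proof.
elim: h => [|j h [ha hb]] /=; first by split.
case: (unlift ord0 j) => [i|] /=.
- split => //; apply: inAs_upd => //. exact (hA i h _ _ ha hb).1.
- split => //; exact: (hB h _ ha).1.
Qed.

Lemma traj_B h : tr (ord0 :: h) = ((tr h).1, selB h (tr h).1).
Proof. by rewrite /= unlift_none. Qed.

Lemma traj_A h i :
  tr (lift ord0 i :: h) = (upd (tr h).1 (selA i h (tr h).1 (tr h).2), (tr h).2).
Proof. by rewrite /= liftK. Qed.

Definition ind eps (h : seq 'I_n.+1) : R :=
  if `[< inN p d rho eps (tr h).1 (tr h).2 >] then 1 else 0.

Lemma step eps h : 0 < eps ->
  \sum_(j : 'I_n.+1) phi (tr (j :: h)).1 (tr (j :: h)).2
  <= \sum_(j : 'I_n.+1) phi (tr h).1 (tr h).2 - eps * (1 - ind eps h).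
Proof.
move=> e0; have [ha hb] := traj_feas h.
have dec : forall j : 'I_n.+1, phi (tr (j :: h)).1 (tr (j :: h)).2 <= phi (tr h).1 (tr h).2.
  move=> j; case: (unliftP ord0 j) => [i ->|->].
  - rewrite traj_A /=.
    have := phi_upd (tr h).1 _ (selA i h (tr h).1 (tr h).2) (tr h).2.
    have [_ hm] := hA i h _ _ ha hb.
    have := hm ((tr h).1 i) (ha i); rewrite upd_self; lra.
  - rewrite traj_B /= /phi; have [_ hm] := hB h _ ha; have := hm _ hb; rewrite /V; lra.
rewrite /ind; case: asboolP => [_|hn].
  by rewrite subrr mulr0 subr0; apply: ler_sum => j _; exact: dec j.
case: (pselect (exists j0 : 'I_n.+1,
   phi (tr (j0 :: h)).1 (tr (j0 :: h)).2 <= phi (tr h).1 (tr h).2 - eps)) => [[j0 hj0]|nex].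
  rewrite subr0 mulr1 (bigD1 j0) //= [X in _ <= X - _](bigD1 j0) //=.
  have : \sum_(j | j != j0) phi (tr (j :: h)).1 (tr (j :: h)).2
     <= \sum_(j | j != j0) phi (tr h).1 (tr h).2.
    by apply: ler_sum => j _; exact: dec.
  lra.
exfalso; apply: hn.
have gt j0 : phi (tr h).1 (tr h).2 - eps < phi (tr (j0 :: h)).1 (tr (j0 :: h)).2.
  by rewrite ltNge; apply/negP => hle; apply: nex; exists j0.
split; first exact: ha.
split; first exact: hb.
split.
- move=> j a hAa; have g := gt (lift ord0 j); rewrite traj_A /= in g.
  have := phi_upd (tr h).1 _ (selA j h (tr h).1 (tr h).2) (tr h).2.
  have [_ hm] := hA j h _ _ ha hb; have := hm a hAa; lra.
- move=> bb hbb; have g := gt ord0; rewrite traj_B /= /phi in g.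
  have [_ hm] := hB h _ ha; have := hm bb hbb; rewrite /V; lra.
Qed.


Lemma sum_tuple_cons {T : finType} k (F : seq T -> R) :
  \sum_(t : k.+1.-tuple T) F t = \sum_(t : k.-tuple T) \sum_(j : T) F (j :: t).
Proof.
rewrite [RHS]exchange_big [RHS]pair_big /=.
rewrite (reindex (fun pr : T * k.-tuple T => cons_tuple pr.1 pr.2)) /=.
  by apply: eq_bigr => -[j t].
exists (fun t : k.+1.-tuple T => (thead t, behead_tuple t)).
- move=> [j t] _ /=; congr pair; last by apply: val_inj.
- move=> t _; apply: val_inj => /=; case: t => -[|x s] hs //=.
Qed.

Definition Ek k : R := \sum_(t : k.-tuple 'I_n.+1) phi (tr t).1 (tr t).2.
Definition Gk eps k : R := \sum_(t : k.-tuple 'I_n.+1) ind eps t.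
Definition ck k : R := ((n.+1) ^ k)%:R.

Lemma sum_one k : \sum_(t : k.-tuple 'I_n.+1) (1 : R) = ck k.
Proof. by rewrite sumr_const card_tuple card_ord /ck. Qed.

Lemma ck_gt0 k : 0 < ck k.
Proof. by rewrite /ck ltr0n expn_gt0. Qed.

Lemma Ek_rec eps k : 0 < eps ->
  Ek k.+1 <= (n.+1)%:R * Ek k - eps * (ck k - Gk eps k).
Proof.
move=> e0; rewrite /Ek (sum_tuple_cons _ (fun s => phi (tr s).1 (tr s).2)).
apply: (le_trans (y := \sum_(t : k.-tuple 'I_n.+1)
   (\sum_(j : 'I_n.+1) phi (tr t).1 (tr t).2 - eps * (1 - ind eps t)))).
  by apply: ler_sum => t _; exact: step.
rewrite le_eqVlt; apply/orP; left; apply/eqP; rewrite sumrB -mulr_sumr sumrB sum_one /Gk mulr_sumr; congr (_ - _).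
apply: eq_bigr => t _. by rewrite sumr_const card_ord mulr_natl.
Qed.

Lemma Ek_lb k : - (`|rho| * Cb) * ck k <= Ek k.
Proof.
rewrite -sum_one mulr_sumr; apply: ler_sum => t _; rewrite mulr1.
have [ha hb] := traj_feas t; exact: phi_lb.
Qed.

Lemma Gk_le eps k : 0 <= Gk eps k <= ck k.
Proof.
rewrite -sum_one; apply/andP; split.
  by apply: sumr_ge0 => t _; rewrite /ind; case: asboolP.
by apply: ler_sum => t _; rewrite /ind; case: asboolP.
Qed.

Lemma main_sec eps : 0 < eps ->
  ((fun k => probN p d rho al0 b0 selB selA eps k) @ \oo --> (1 : R))%classic.
Proof.
move=> e0.
set N : R := (n.+1)%:R.
have N0 : 0 < N by rewrite ltr0n.
pose a k : R := Ek k / ck k.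
pose u k : R := 1 - Gk eps k / ck k.
have u0 k : 0 <= u k.
  rewrite /u subr_ge0 ler_pdivrMr ?ck_gt0 // mul1r; by case/andP: (Gk_le eps k).
have rec k : a k.+1 + eps / N * u k <= a k.
  have := Ek_rec eps k e0.
  have ck1 : ck k.+1 = N * ck k by rewrite /ck expnS natrM.
  have c0 := ck_gt0 k.
  rewrite /a /u ck1 => h.
  have E : Ek k.+1 / (N * ck k) + eps / N * (1 - Gk eps k / ck k) - Ek k / ck k
     = (Ek k.+1 - (N * Ek k - eps * (ck k - Gk eps k))) / (N * ck k).
    by field; apply/andP; split; apply: lt0r_neq0; [exact: c0 | have := ler0n R n; lra].
  by rewrite -subr_le0 E ler_pdivrMr ?mulr_gt0 // mul0r subr_le0.
have part K : a K + eps / N * \sum_(0 <= k < K) u k <= a 0.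
  elim: K => [|K IH]; first by rewrite big_geq // mulr0 addr0.
  rewrite big_nat_recr //= mulrDr addrCA addrC; apply: le_trans IH; rewrite lerD2r; exact: rec.
set L := - (`|rho| * Cb).
have lb K : L <= a K by rewrite /a ler_pdivlMr ?ck_gt0 //; exact: Ek_lb.
have bound K : \sum_(0 <= k < K) u k <= (a 0 - L) / (eps / N).
  rewrite ler_pdivlMr ?divr_gt0 // mulrC; have := part K; have := lb K; move: (eps / N * \sum_(0 <= k < K) u k) => t; lra.
have cu : cvgn (series u).
  apply: nondecreasing_is_cvgn.
    by apply: nondecreasing_series => k _ _; exact: u0.
  by exists ((a 0 - L) / (eps / N)) => _ [K _ <-]; exact: bound K.
have hu := cvg_series_cvg_0 cu.
have -> : (fun k => probN p d rho al0 b0 selB selA eps k) = (fun k => 1 - u k).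
  apply: funext => k.
  have -> : probN p d rho al0 b0 selB selA eps k = Gk eps k / ck k by [].
  rewrite /u; ring.
have h := cvgB (cvg_cst (1:R)) hu; rewrite subr0 in h; exact: h.
Qed.

End Aux.

Theorem mainTheorem9 (R : realType) (n : nat) (X : finType) (W Y : 'I_n -> finType)
  (p : X -> Zs n X -> Ws W -> R) (d : X -> X -> R) (rho : R)
  (al0 : profile R X W Y) (b0 : rstrat R X Y)
  (selB : seq 'I_n.+1 -> profile R X W Y -> rstrat R X Y)
  (selA : forall j : 'I_n, seq 'I_n.+1 -> profile R X W Y -> rstrat R X Y -> strat R X W Y j) :
  (2 <= n)%N ->
  (0 < #|X|)%N -> (forall i, 0 < #|W i|)%N -> (forall i, 0 < #|Y i|)%N ->
  is_pmf p ->
  (forall x xh, 0 <= d x xh) ->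
  inAs al0 -> inB b0 ->
  (forall h al, inAs al ->
     inB (selB h al) /\
     forall b, inB b -> V p d al (selB h al) <= V p d al b) ->
  (forall (j : 'I_n) h al b, inAs al -> inB b ->
     inA (selA j h al b) /\
     forall a : strat R X W Y j, inA a ->
       U p d rho j (upd al (selA j h al b)) b <= U p d rho j (upd al a) b) ->
  forall eps : R, 0 < eps ->
    ((fun k => probN p d rho al0 b0 selB selA eps k) @ \oo --> (1 : R))%classic.
Proof.
move=> _ _ _ _ hp hd h0 hb0 hB hA eps e0.
by apply: main_sec.
Qed.
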